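(* Let ${\tt G}$ be a connected digraph with exactly $n>2$ edges. If the path poset $P({\tt G})$ is isomorphic to $\mathbb B(n)$ with its maximum removed, then ${\tt G}\cong{\tt P}_{n-1}$.
   Context: A digraph ${\tt G}=(V,E)$ has finite $V$ and $E\subseteq (V\times V)\setminus\{(v,v)\}$; connected means the underlying undirected graph is connected. A multipath of ${\tt G}$ is a spanning subgraph (all vertices, subset of edges) each of whose components is an isolated vertex or a simple directed path (edges $e_1,\dots,e_k$ with target of $e_i$ equal to source of $e_{i+1}$, no repeated vertex, not a cycle); $P({\tt G})$ is the set of multipaths ordered by inclusion of edge sets. $\mathbb B(n)$ is the power set of $\{0,\dots,n-1\}$ ordered by inclusion. ${\tt P}_m$ is the coherently oriented polygon with vertices $v_0,\dots,v_m$ and edges $(v_i,v_{i+1})$, $0\le i<m$, and $(v_m,v_0)$ (so it has $m+1$ edges). *)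

(* Defs.v *)
From mathcomp Require Import all_boot.
Set Implicit Arguments. Unset Strict Implicit. Unset Printing Implicit Defensive.

Definition digraph (V : finType) (E : {set V * V}) : Prop :=
  forall v : V, (v, v) \notin E.

Definition uadj (V : finType) (E : {set V * V}) : rel V :=
  fun x y => ((x, y) \in E) || ((y, x) \in E).

Definition dconnected (V : finType) (E : {set V * V}) : Prop :=
  forall x y : V, connect (uadj E) x y.

Definition comp (V : finType) (F : {set V * V}) (x : V) : {set V} :=
  [set y | connect (uadj F) x y].

Definition edges_in (V : finType) (F : {set V * V}) (C : {set V}) : {set V * V} :=
  [set e in F | (e.1 \in C) && (e.2 \in C)].

Definition path_edges (V : finType) (s : seq V) : {set V * V} :=
  [set e | e \in zip s (behead s)].

(* a multipath of (V,E): a spanning subgraph (V,F), F \subset E, each of whose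
   components is an isolated vertex or a simple directed path, i.e. is traversed
   by a duplicate-free sequence of vertices s (size 1 = isolated vertex) whose
   consecutive pairs are exactly the edges of the component. *)
Definition multipath (V : finType) (E F : {set V * V}) : Prop :=
  F \subset E /\
  forall x : V, exists s : seq V,
    [/\ uniq s, s != [::], comp F x = [set y in s] &
        edges_in F (comp F x) = path_edges s].

(* P(G) (multipaths ordered by inclusion) is isomorphic to B(n) minus its
   maximum (proper subsets of {0,...,n-1} ordered by inclusion). *)
Definition path_poset_iso_Bn_minus_top (V : finType) (E : {set V * V}) (n : nat)
  : Prop :=
  exists f : {set V * V} -> {set 'I_n},
    [/\ forall F, multipath E F -> f F != setT,
        forall S : {set 'I_n}, S != setT -> exists2 F, multipath E F & f F = S &
        forall F F', multipath E F -> multipath E F' ->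
          (F \subset F') = (f F \subset f F')].

(* the coherently oriented polygon P_m on vertices v_0..v_m ('I_m.+1),
   edges (v_i, v_{i+1}) for i < m and (v_m, v_0) *)
Definition polygon_edges (m : nat) : {set 'I_m.+1 * 'I_m.+1} :=
  [set e | (val e.2 == (val e.1).+1) || ((val e.1 == m) && (val e.2 == 0))].

Definition iso_polygon (V : finType) (E : {set V * V}) (m : nat) : Prop :=
  exists phi : V -> 'I_m.+1,
    bijective phi /\
    forall x y : V, ((x, y) \in E) = ((phi x, phi y) \in polygon_edges m).

(* Main.v *)
Require Import Defs.
From mathcomp Require Import all_boot zify.
Set Implicit Arguments. Unset Strict Implicit. Unset Printing Implicit Defensive.

Section Aux.
Variable V : finType.
Implicit Types (E F : {set V * V}) (s t : seq V).

Lemma closed_conn (e : rel V) (S : {set V}) x y :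
  (forall a b, e a b -> a \in S -> b \in S) -> x \in S -> connect e x y -> y \in S.
Proof.
move=> cl xS /connectP[p pp ->]; elim: p x xS pp => //= z p IH x xS /andP[exz pz].
exact: IH (cl _ _ exz xS) pz.
Qed.

Lemma uadj_sym F : symmetric (uadj F).
Proof. by move=> x y; rewrite /uadj orbC. Qed.

Lemma zip_idx s x0 a b : (a, b) \in zip s (behead s) ->
  exists2 i, i.+1 < size s & nth x0 s i = a /\ nth x0 s i.+1 = b.
Proof.
move/(nthP (x0, x0)) => [i hi]; rewrite nth_zip_cond hi nth_behead => -[<- <-].
exists i => //; move: hi; rewrite size_zip size_behead; case: (size s) => [|k] /=; lia.
Qed.

Lemma zip_src s a b c : uniq s -> (a, b) \in zip s (behead s) ->
  (a, c) \in zip s (behead s) -> b = c.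
Proof.
move=> us /(zip_idx a) [i hi [h1 h2]] /(zip_idx a) [j hj [h3 h4]].
have : nth a s i == nth a s j by rewrite h1 h3.
rewrite nth_uniq //; [|exact: ltnW|exact: ltnW]. by move/eqP => ij; rewrite -h2 -h4 ij.
Qed.

Lemma zip_tgt s a b c : uniq s -> (a, c) \in zip s (behead s) ->
  (b, c) \in zip s (behead s) -> a = b.
Proof.
move=> us /(zip_idx a) [i hi [h1 h2]] /(zip_idx a) [j hj [h3 h4]].
have : nth a s i.+1 == nth a s j.+1 by rewrite h2 h4.
rewrite nth_uniq //. by move/eqP => [ij]; rewrite -h1 -h3 ij.
Qed.

Lemma zip_2cyc s a b : uniq s -> (a, b) \in zip s (behead s) ->
  (b, a) \in zip s (behead s) -> False.
Proof.
move=> us /(zip_idx a) [i hi [h1 h2]] /(zip_idx a) [j hj [h3 h4]].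
have : nth a s i.+1 == nth a s j by rewrite h2 h3.
have : nth a s i == nth a s j.+1 by rewrite h1 h4.
rewrite !nth_uniq //; try exact: ltnW.
by move=> /eqP -> /eqP; lia.
Qed.

Lemma succ_in x t y : y \in x :: t -> y != last x t ->
  exists z, (y, z) \in zip (x :: t) t.
Proof.
elim: t x => [|z t IH] x /=.
  by rewrite inE => /eqP ->; rewrite eqxx.
rewrite inE => /orP[/eqP->|yin] ne.
  by exists z; rewrite inE eqxx.
have [w hw] := IH z yin ne. by exists w; rewrite inE hw orbT.
Qed.

Lemma zip_rcons1 x t u :
  zip (x :: rcons t u) (rcons t u) = rcons (zip (x :: t) t) (last x t, u).
Proof. by elim: t x => [|z t IH] x //=; rewrite IH. Qed.

End Aux.

Section Aux2.
Variable V : finType.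
Implicit Types (E F : {set V * V}) (s t : seq V).

Lemma comp_self F x : x \in Defs.comp F x.
Proof. by rewrite inE connect0. Qed.

Lemma comp_step F x a b : a \in Defs.comp F x -> uadj F a b -> b \in Defs.comp F x.
Proof. by rewrite !inE => h1 h2; apply: connect_trans h1 (connect1 h2). Qed.

Lemma mp_zip E F a b c d : multipath E F -> (a,b) \in F -> (c,d) \in F ->
  connect (uadj F) a c ->
  exists s, [/\ uniq s, (a,b) \in zip s (behead s) & (c,d) \in zip s (behead s)].
Proof.
move=> [_ /(_ a) [s [us _ _ he]]] ab cd ac.
have ca : c \in Defs.comp F a by rewrite inE.
have ba : b \in Defs.comp F a by apply: comp_step (comp_self F a) _; rewrite /uadj ab.
have da : d \in Defs.comp F a by apply: comp_step ca _; rewrite /uadj cd.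
have : (a,b) \in edges_in F (Defs.comp F a) by rewrite inE ab /= comp_self ba.
have : (c,d) \in edges_in F (Defs.comp F a) by rewrite inE cd /= ca da.
by rewrite he !inE => h1 h2; exists s.
Qed.

Lemma mp0 E : multipath E set0.
Proof.
split; first exact: sub0set.
move=> x; exists [:: x]; split => //.
  apply/setP => y; rewrite !inE; apply/idP/idP; last by move/eqP->; exact: connect0.
  move=> h; have := closed_conn (S := [set x]) _ _ h.
  by rewrite !inE; apply => // a b; rewrite /uadj !inE.
by apply/setP => e; rewrite !inE.
Qed.

Lemma mp1 E a b : digraph E -> (a, b) \in E -> multipath E [set (a, b)].
Proof.
move=> dg ab; have nab : a != b by apply/eqP => eab; move: (dg a); rewrite {2}eab ab.
split; first by rewrite sub1set.
move=> x; case: (boolP (x \in [set a; b])) => hx.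
  have cab : Defs.comp [set (a,b)] x = [set a; b].
    apply/setP => y; rewrite !inE; apply/idP/idP.
      move=> h; have := closed_conn (S := [set a; b]) _ hx h; rewrite !inE; apply.
      move=> u v; rewrite /uadj !inE !xpair_eqE.
      by case/orP => /andP[/eqP-> /eqP->]; rewrite !eqxx ?orbT.
    have hab : connect (uadj [set (a,b)]) a b by apply: connect1; rewrite /uadj !inE eqxx.
    have hba : connect (uadj [set (a,b)]) b a by apply: connect1; rewrite /uadj !inE eqxx orbT.
    move: hx; rewrite !inE => /orP[]/eqP-> /orP[]/eqP->; rewrite ?connect0 //.
  exists [:: a; b]; split => //; first by rewrite /= inE nab.
    by rewrite cab; apply/setP => y; rewrite !inE.
  rewrite cab; apply/setP => e; rewrite !inE.
  case: (boolP (e == (a,b))) => [/eqP->|]; first by rewrite /= !eqxx ?orbT.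
  by rewrite andFb.
have cx : Defs.comp [set (a,b)] x = [set x].
  apply/setP => y; rewrite !inE; apply/idP/idP; last by move/eqP->; exact: connect0.
  move=> h; have := closed_conn (S := [set x]) _ _ h; rewrite !inE; apply => //.
  move=> u v; rewrite /uadj !inE !xpair_eqE.
  by case/orP => /andP[/eqP-> /eqP->] /eqP xe; move: hx; rewrite !inE xe eqxx ?orbT.
exists [:: x]; split => //; rewrite cx; first by apply/setP => y; rewrite !inE.
apply/setP => e; rewrite !inE.
case: (boolP (e == (a,b))) => [/eqP->|] //=.
have ax : (a == x) = false by apply/negbTE; apply: contra hx => /eqP <-; rewrite !inE eqxx.
by rewrite ax.
Qed.

End Aux2.

Section Poset.
Variables (V : finType) (E : {set V * V}) (n : nat) (f : {set V * V} -> {set 'I_n}).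
Hypotheses (dg : digraph E) (cE : #|E| = n) (n2 : 2 < n)
  (fT : forall F, multipath E F -> f F != setT)
  (fS : forall S : {set 'I_n}, S != setT -> exists2 F, multipath E F & f F = S)
  (fM : forall F F', multipath E F -> multipath E F' ->
          (F \subset F') = (f F \subset f F')).

Lemma ne_setT (S : {set 'I_n}) i : i \notin S -> S != setT.
Proof. by apply: contraNneq => ->; rewrite inE. Qed.

Lemma mp1' e : e \in E -> multipath E [set e].
Proof. by case: e => a b; apply: mp1. Qed.

Lemma f0 : f set0 = set0.
Proof.
have i0 : 'I_n by exists 0; lia.
have h0 : i0 \notin (set0 : {set 'I_n}) by rewrite inE.
have [F mF fF] := fS (ne_setT h0).
apply/eqP; rewrite -subset0 -fF -fM //; [exact: sub0set | exact: mp0].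
Qed.

Lemma fsing e : e \in E -> exists i, f [set e] = [set i].
Proof.
case: e => a b ab; have m1 := mp1 dg ab.
have : f [set (a,b)] != set0.
  apply/eqP => h; have : [set (a,b)] \subset set0 by rewrite fM ?h ?f0 //; exact: mp0.
  by rewrite subset0 -cards_eq0 cards1.
case/set0Pn => i hi; exists i.
have j0 : exists j : 'I_n, j != i.
  have h1 : 1 < n by lia.
  have h0 : 0 < n by lia.
  case: (eqVneq (Ordinal h0) i) => [<-|]; last by move=> h; exists (Ordinal h0).
  by exists (Ordinal h1).
case: j0 => j ji.
have hj : j \notin [set i] by rewrite inE.
have [F mF fF] := fS (ne_setT hj).
have : F \subset [set (a,b)] by rewrite fM // fF sub1set.
rewrite subset1 => /orP[/eqP FE|/eqP F0]; first by rewrite -fF FE.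
by move: fF; rewrite F0 f0 => /setP /(_ i); rewrite !inE eqxx.
Qed.

Lemma cover (A : {set V * V}) : A \proper E -> exists2 F, multipath E F & A \subset F.
Proof.
move=> /properP [AE [e0 e0E e0A]].
have [i0 fi0] := fsing e0E.
set S := \bigcup_(e in A) f [set e].
have i0S : i0 \notin S.
  apply/bigcupP => -[e eA]; have eE : e \in E by apply: (subsetP AE).
  have [i fi] := fsing eE; rewrite fi inE => /eqP ii0.
  have : [set e] \subset [set e0].
    rewrite fM; [by rewrite fi fi0 ii0 | exact: mp1' | exact: mp1'].
  by rewrite sub1set inE => /eqP ee0; move: e0A; rewrite -ee0 eA.
have [F mF fF] := fS (ne_setT i0S).
exists F => //; apply/subsetP => e eA.
have eE : e \in E by apply: (subsetP AE).
have : [set e] \subset F by rewrite fM ?fF; [exact: (bigcup_sup _ eA) | exact: mp1' |].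
by rewrite sub1set.
Qed.

Lemma other_ord (i : 'I_n) : exists j : 'I_n, j != i.
Proof.
have h1 : 1 < n by lia.
have h0 : 0 < n by lia.
case: (eqVneq (Ordinal h0) i) => [<-|]; last by move=> h; exists (Ordinal h0).
by exists (Ordinal h1).
Qed.

Lemma noE : ~ multipath E E.
Proof.
move=> mE; have nT := fT mE.
have [i fi] : exists i, i \notin f E.
  case: (pickP (fun i => i \notin f E)) => [i fi|h]; first by exists i.
  have FT : f E = setT by apply/setP => j; rewrite inE; move/negbFE: (h j).
  by rewrite FT eqxx in nT.
have [j ji] := other_ord i.
have hj : j \notin ~: [set j] by rewrite !inE eqxx.
have [F mF fF] := fS (ne_setT hj).
have : f F \subset f E by rewrite -fM //; case: mF.
move/subsetP/(_ i); rewrite fF !inE eq_sym ji => /(_ isT).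
by apply/negP.
Qed.

Lemma pairF a b c d : (a,b) \in E -> (c,d) \in E ->
  exists2 F, multipath E F & ((a,b) \in F) && ((c,d) \in F).
Proof.
move=> ab cd.
have : [set (a,b); (c,d)] \proper E.
  rewrite properEcard cards2 cE; apply/andP; split.
    by apply/subsetP => e; rewrite !inE => /orP[]/eqP->.
  by case: (_ != _); lia.
case/cover => F mF /subsetP sF; exists F => //.
by rewrite !sF // !inE eqxx ?orbT.
Qed.

Lemma outd a b c : (a,b) \in E -> (a,c) \in E -> b = c.
Proof.
move=> ab ac; have [F mF /andP[abF acF]] := pairF ab ac.
have [s [us h1 h2]] := mp_zip mF abF acF (connect0 _ _).
exact: zip_src us h1 h2.
Qed.

Lemma ind a b c : (a,c) \in E -> (b,c) \in E -> a = b.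
Proof.
move=> ac bc; have [F mF /andP[acF bcF]] := pairF ac bc.
have conn : connect (uadj F) a b.
  apply: (connect_trans (y := c)); apply: connect1; by rewrite /uadj ?acF ?bcF ?orbT.
have [s [us h1 h2]] := mp_zip mF acF bcF conn.
exact: zip_tgt us h1 h2.
Qed.

Lemma no2 a b : (a,b) \in E -> (b,a) \in E -> False.
Proof.
move=> ab ba; have [F mF /andP[abF baF]] := pairF ab ba.
have conn : connect (uadj F) a b by apply: connect1; rewrite /uadj abF.
have [s [us h1 h2]] := mp_zip mF abF baF conn.
exact: zip_2cyc us h1 h2.
Qed.

Lemma Emin e : e \in E -> multipath E (E :\ e).
Proof.
move=> eE; have [F mF sF] := cover (properD1 eE).
have FE : F \subset E by case: mF.
suff -> : E :\ e = F by [].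
apply/eqP; rewrite eqEsubset sF /=.
case: (boolP (e \in F)) => eF.
  have : E \subset F by rewrite -(setD1K eE) subUset sub1set eF sF.
  move=> EF; have FE' : F = E by apply/eqP; rewrite eqEsubset FE EF.
  by move: mF; rewrite FE' => /noE.
apply/subsetP => x xF; rewrite !inE (subsetP FE _ xF) andbT.
by apply: contraNneq eF => <-.
Qed.

End Poset.

Section Out.
Variables (V : finType) (E : {set V * V}).
Hypotheses (dg : digraph E) (conn : dconnected E) (E0 : 0 < #|E|)
  (outd : forall a b c, (a,b) \in E -> (a,c) \in E -> b = c)
  (ind : forall a b c, (a,c) \in E -> (b,c) \in E -> a = b)
  (Emin : forall e, e \in E -> multipath E (E :\ e))
  (noE : ~ multipath E E).

Lemma out1 u : exists v, (u,v) \in E.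
Proof.
case: (pickP (fun v => (u,v) \in E)) => [v h|nout]; first by exists v.
exfalso.
case: (pickP (fun p => (p,u) \in E)) => [p pu|nin]; last first.
  have /set0Pn [[a b] ab] : E != set0 by rewrite -card_gt0.
  have [w [wE wu]] : exists w, (w == a) || (w == b) /\ w != u.
    case: (eqVneq a u) => [au|au]; last by exists a; rewrite eqxx.
    exists b; rewrite eqxx orbT; split => //; apply/eqP => bu; move: (dg a).
    by rewrite {2}au -bu ab.
  have : w \in [set u].
    apply: (closed_conn _ _ (conn u w)); last by rewrite inE.
    move=> a' b'; rewrite inE /uadj => h /eqP au.
    by move: h; rewrite au nout nin.
  by rewrite inE (negbTE wu).
set F := E :\ (p,u).
have mF := Emin pu.
have uiso : forall z, uadj F u z = false.
  move=> z; rewrite /uadj !inE nout andbF /=.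
  case: (boolP ((z,u) \in E)) => zu; last by rewrite andbF.
  by rewrite (ind zu pu) eqxx.
have pu' : p != u by apply/eqP => pu2; move: (dg p); rewrite {2}pu2 pu.
case: mF => FE /(_ p) [s [us sn cs es]].
have unc : u \notin Defs.comp F p.
  apply/negP; rewrite inE => hu.
  have : u \in ~: [set u].
    apply: (closed_conn _ _ hu); last by rewrite !inE.
    move=> a b h; rewrite !inE => au; apply/eqP => bu.
    by move: h; rewrite bu uadj_sym uiso.
  by rewrite !inE eqxx.
case: s us sn cs es => [//|x t] us _ cs es.
have pin : p \in x :: t by move: (comp_self F p); rewrite cs inE.
have lastp : last x t = p.
  apply/eqP; apply/negPn/negP => ne; rewrite eq_sym in ne.
  have [z hz] := succ_in pin ne.
  have : (p, z) \in path_edges (x :: t) by rewrite inE.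
  rewrite -es !inE /= => /andP[/andP[pzu pz] _].
  by move: pzu; rewrite (outd pz pu) eqxx.
have ut : u \notin x :: t by move: unc; rewrite cs inE.
have mr : forall y, (y \in rcons (x :: t) u) = (y == u) || (y \in x :: t).
  by move=> y; rewrite mem_rcons in_cons.
have Sall : forall y, y \in rcons (x :: t) u.
  move=> y; have : y \in [set y in rcons (x :: t) u]; last by rewrite in_set.
  apply: (closed_conn _ _ (conn p y)); last by rewrite in_set mr pin orbT.
  move=> a1 b1 h; rewrite !in_set => ha1; rewrite mr.
  move: ha1; rewrite mr => /orP[/eqP au|ain].
    by move: h; rewrite au /uadj nout /= => h; rewrite (ind h pu) pin orbT.
  have ha : a1 \in Defs.comp F p by rewrite cs inE.
  case: (boolP (uadj F a1 b1)) => hF.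
    by move: (comp_step ha hF); rewrite cs inE => ->; rewrite orbT.
  move: h hF; rewrite /uadj !inE.
  case/orP => h; rewrite h !andbT.
    by move=> /norP [/negbNE/eqP [_ ->] _]; rewrite eqxx.
  by move=> /norP [_ /negbNE/eqP [-> _]]; move: pin; rewrite inE => ->; rewrite orbT.
apply: noE; split; first exact: subxx.
move=> w; exists (rcons (x :: t) u); split.
- by rewrite rcons_uniq ut us.
- by case: (t).
- apply/setP => y; rewrite !in_set Sall; exact: conn.
have cw : Defs.comp E w = setT by apply/setP => y; rewrite !inE; exact: conn.
apply/setP => e; rewrite cw /path_edges /= zip_rcons1 lastp !inE mem_rcons inE.
case: (eqVneq e (p,u)) => [->|ne] /=; first by rewrite pu.
have pe : (e \in zip (x :: t) t) = (e \in path_edges (x :: t)) by rewrite inE.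
rewrite pe -es !inE ne /=.
case: (boolP (e \in E)) => eE //=.
have eF : uadj F e.1 e.2 by rewrite /uadj !inE -surjective_pairing ne eE.
have e1u : e.1 != u by apply: contraTneq eF => ->; rewrite uiso.
have e2u : e.2 != u by apply: contraTneq eF => ->; rewrite uadj_sym uiso.
have c1 : e.1 \in Defs.comp F p by rewrite cs in_set; move: (Sall e.1); rewrite mr (negbTE e1u).
have c2 : e.2 \in Defs.comp F p by rewrite cs in_set; move: (Sall e.2); rewrite mr (negbTE e2u).
by move: c1 c2; rewrite !in_set => -> ->.
Qed.

End Out.

Lemma cyc (V : finType) (E : {set V * V}) m :
  dconnected E -> #|E| = m.+1 -> 1 < m ->
  (forall a b c, (a,b) \in E -> (a,c) \in E -> b = c) ->
  (forall a b c, (a,c) \in E -> (b,c) \in E -> a = b) ->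
  (forall u, exists v, (u,v) \in E) ->
  iso_polygon E m.
Proof.
move=> conn cE m1 outd ind out1.
pose g x := odflt x [pick y | (x,y) \in E].
have gE x : (x, g x) \in E.
  rewrite /g; case: pickP => [y //|h] /=.
  by have [v hv] := out1 x; move: (h v); rewrite hv.
have Eg x y : ((x,y) \in E) = (y == g x).
  by apply/idP/eqP => [h|->]; [exact: outd h (gE x) | exact: gE].
have ginj : injective g.
  by move=> x y h; apply: (ind _ _ (g x) (gE x)); rewrite h; exact: gE.
have /set0Pn [[x0 b0] _] : E != set0 by rewrite -card_gt0 cE.
have fc y : fconnect g x0 y.
  apply: (connect_sub _ (conn x0 y)) => a b; rewrite /uadj !Eg => /orP[/eqP->|/eqP->].
    exact: fconnect1.
  by rewrite fconnect_sym //; exact: fconnect1.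
have cV : #|V| = m.+1.
  have EI : E = [set (x, g x) | x in [set: V]].
    apply/setP => -[x y]; rewrite Eg; apply/eqP/imsetP => [->|[z _ [-> ->]]] //.
    by exists x; rewrite ?inE.
  by rewrite -cE EI card_imset ?cardsT // => x y [].
have ord : order g x0 = m.+1.
  by rewrite /order -cV; apply: eq_card => y; have h : y \in fconnect g x0 := fc y; by rewrite h inE.
have hlt y : findex g x0 y < m.+1 by rewrite -ord findex_max.
have fe a b : (a == b) = (findex g x0 a == findex g x0 b).
  apply/eqP/eqP => [->//|h].
  by rewrite -(iter_findex (fc a)) h iter_findex.
exists (fun y => Ordinal (hlt y)); split.
  apply: inj_card_bij; last by rewrite card_ord cV.
  by move=> y z /(congr1 val) /= /eqP; rewrite -fe => /eqP.
move=> x y; rewrite Eg inE /= fe.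
set k := findex g x0 x.
have xk : x = iter k g x0 by rewrite iter_findex.
have kl : k < m.+1 by apply: hlt.
have hy := hlt y.
case: (ltngtP k.+1 m.+1) => hk.
- have -> : findex g x0 (g x) = k.+1 by rewrite xk -iterS findex_iter // ord.
  have -> : (k == m) = false by apply/eqP; lia.
  by rewrite andFb orbF.
- lia.
- have -> : g x = x0 by rewrite xk -iterS hk -ord iter_order.
  rewrite findex0.
  have -> : (findex g x0 y == k.+1) = false by apply/eqP; lia.
  have -> : (k == m) by apply/eqP; lia.
  by [].
Qed.

Theorem proposition2p37 (V : finType) (E : {set V * V}) (n : nat) :
  digraph E -> dconnected E -> #|E| = n -> 2 < n ->
  path_poset_iso_Bn_minus_top E n ->
  iso_polygon E n.-1.
Proof.
move=> dg conn cE n2 [f [fT fS fM]].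
have od : forall a b c, (a,b) \in E -> (a,c) \in E -> b = c.
  by move=> a b c h1 h2; apply: (outd dg cE n2 fS fM h1 h2).
have id : forall a b c, (a,c) \in E -> (b,c) \in E -> a = b.
  by move=> a b c h1 h2; apply: (ind dg cE n2 fS fM h1 h2).
have em : forall e, e \in E -> multipath E (E :\ e).
  by move=> e he; apply: (Emin dg cE n2 fT fS fM he).
have ne : ~ multipath E E by apply: (noE cE n2 fT fS fM).
have E0 : 0 < #|E| by rewrite cE; lia.
have o1 := out1 dg conn E0 od id em ne.
case: n cE n2 {fT fS fM f} => [|m] cE n2 //=.
apply: cyc => //; lia.
Qed.
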